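(* Let $(R,\mathfrak{m})$ be a commutative Artinian local ring with identity, $\mathfrak{m}\neq0$ and $\mathfrak{m}^2=0$, and let $q\in R[x]$ be an irreducible GE polynomial. For every integer $n\ge2$: if $n$ is even then $\{2,4,6,\dots,n-2,n\}\subseteq L(q^n)$; if $n$ is odd then $\{3,5,7,\dots,n-2,n\}\subseteq L(q^n)$.
   Context: A generalized Eisenstein (GE) polynomial is a nonconstant monic polynomial $x^d+f_{d-1}x^{d-1}+\dots+f_0\in R[x]$ with $f_i\in\mathfrak{m}$ for all $i<d$. A nonunit polynomial is irreducible if in any factorization into two polynomials one factor is a unit of $R[x]$. A positive integer $k$ is a length of $f$ if $f$ is a product of $k$ irreducible polynomials; $L(f)$ denotes the set of lengths of $f$. *)

(* Defs.v *)
From HB Require Import structures.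
From mathcomp Require Import all_boot all_order all_algebra.
Set Implicit Arguments. Unset Strict Implicit. Unset Printing Implicit Defensive.
Import Order.TTheory GRing.Theory Num.Theory.
Local Open Scope ring_scope.

Section Defs.
Variable R : comUnitRingType.

(* The non-units of R; in a local ring this is the maximal ideal m. *)
Definition nonunit (x : R) : Prop := x \isn't a GRing.unit.

(* R is local: the non-units form an ideal (closed under addition;
   closure under multiplication by ring elements is automatic). *)
Definition is_local : Prop :=
  forall x y : R, nonunit x -> nonunit y -> nonunit (x + y).

Definition is_ideal (I : R -> Prop) : Prop :=
  [/\ I 0, (forall x y, I x -> I y -> I (x + y)) & (forall r x, I x -> I (r * x))].

Definition artinian : Prop :=
  forall I : nat -> R -> Prop,
    (forall n, is_ideal (I n)) ->
    (forall n x, I n.+1 x -> I n x) ->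
    exists N, forall n, (N <= n)%N -> forall x, I n x <-> I N x.

Definition punit (f : {poly R}) : Prop := exists g : {poly R}, f * g = 1.

Definition pirreducible (f : {poly R}) : Prop :=
  ~ punit f /\ forall g h : {poly R}, f = g * h -> punit g \/ punit h.

Definition is_length (f : {poly R}) (k : nat) : Prop :=
  (0 < k)%N /\
  exists s : seq {poly R},
    [/\ size s = k, (forall g, g \in s -> pirreducible g) & f = \prod_(g <- s) g].

Definition GE (f : {poly R}) : Prop :=
  [/\ (1 < size f)%N, f \is monic & forall i, (i < (size f).-1)%N -> nonunit f`_i].

End Defs.

(* Main.v *)
Require Import Defs.
From HB Require Import structures.
From mathcomp Require Import all_boot all_order all_algebra.
From mathcomp Require Import zify ring.
From Stdlib Require Import Classical.
Import GRing.Theory.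
Local Open Scope ring_scope.

Section Helpers.
Variable R : comUnitRingType.
Hypothesis Hloc : is_local R.

Lemma nu0 : nonunit (0 : R).
Proof. by rewrite /nonunit unitr0. Qed.

Lemma nuMl (x y : R) : nonunit x -> nonunit (x * y).
Proof. by rewrite /nonunit unitrM => /negbTE ->. Qed.

Lemma nuMr (x y : R) : nonunit y -> nonunit (x * y).
Proof. by rewrite /nonunit unitrM => /negbTE ->; rewrite andbF. Qed.

Lemma nuN (x : R) : nonunit x -> nonunit (- x).
Proof. by move=> h; rewrite -mulN1r; apply: nuMr. Qed.

Lemma unitDnu (u x : R) : u \is a GRing.unit -> nonunit x -> (u + x) \is a GRing.unit.
Proof.
move=> hu hx; apply/negPn/negP => hux.
have : nonunit ((u + x) + - x) by apply: Hloc => //; apply: nuN.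
by rewrite addrK /nonunit hu.
Qed.

Lemma nu_sum (I : Type) (r : seq I) (P : pred I) (F : I -> R) :
  (forall i, P i -> nonunit (F i)) -> nonunit (\sum_(i <- r | P i) F i).
Proof. move=> h; apply: big_ind; [exact: nu0 | exact: Hloc | exact: h]. Qed.

Lemma unit_sum n (F : 'I_n -> R) (j0 : 'I_n) :
  F j0 \is a GRing.unit -> (forall j, j != j0 -> nonunit (F j)) ->
  (\sum_(j < n) F j) \is a GRing.unit.
Proof.
move=> hu hn; rewrite (bigD1 j0) //=; apply: unitDnu => //.
by apply: nu_sum => j /= hj; apply: hn.
Qed.

Lemma low_coef (p r : {poly R}) s t :
  (forall i, (i < s)%N -> nonunit p`_i) -> p`_s \is a GRing.unit ->
  (forall i, (i < t)%N -> nonunit r`_i) -> r`_t \is a GRing.unit ->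
  (p * r)`_(s + t) \is a GRing.unit /\
  (forall i, (i < s + t)%N -> nonunit (p * r)`_i).
Proof.
move=> hp ps hr rt; split.
  rewrite coefM; have hs : (s < (s + t).+1)%N by lia.
  apply: (unit_sum _ _ (Ordinal hs)); first by rewrite addKn unitrM ps rt.
  move=> j hj; have {}hj : (nat_of_ord j != s) by [].
  have [lt|ge] := ltnP j s; first by apply: nuMl; apply: hp.
  apply: nuMr; apply: hr; have := ltn_ord j; lia.
move=> i hi; rewrite coefM; apply: nu_sum => j _.
have [lt|ge] := ltnP j s; first by apply: nuMl; apply: hp.
apply: nuMr; apply: hr; have := ltn_ord j; lia.
Qed.

Lemma high_coef (p r : {poly R}) s t :
  (forall i, (s < i)%N -> nonunit p`_i) -> p`_s \is a GRing.unit ->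
  (forall i, (t < i)%N -> nonunit r`_i) -> r`_t \is a GRing.unit ->
  (p * r)`_(s + t) \is a GRing.unit /\
  (forall i, (s + t < i)%N -> nonunit (p * r)`_i).
Proof.
move=> hp ps hr rt; split.
  rewrite coefM; have hs : (s < (s + t).+1)%N by lia.
  apply: (unit_sum _ _ (Ordinal hs)); first by rewrite addKn unitrM ps rt.
  move=> j hj; have {}hj : (nat_of_ord j != s) by [].
  have [lt|ge] := ltnP s j; first by apply: nuMl; apply: hp.
  apply: nuMr; apply: hr; have := ltn_ord j; lia.
move=> i hi; rewrite coefM; apply: nu_sum => j _.
have [lt|ge] := ltnP s j; first by apply: nuMl; apply: hp.
apply: nuMr; apply: hr; have := ltn_ord j; lia.
Qed.

Lemma unit_range (p : {poly R}) : (exists i, p`_i \is a GRing.unit) ->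
  exists s S, [/\ p`_s \is a GRing.unit, p`_S \is a GRing.unit, (s <= S)%N,
     (forall i, (i < s)%N -> nonunit p`_i) & (forall i, (S < i)%N -> nonunit p`_i)].
Proof.
move=> ex.
have ub : forall i, (fun i => p`_i \is a GRing.unit) i -> (i <= size p)%N.
  move=> i /= hi; rewrite leqNgt; apply/negP => hlt.
  by move: hi; rewrite nth_default ?unitr0 //; lia.
case: (ex_minnP ex) => s hs mins.
case: (ex_maxnP ex ub) => S hS maxS.
exists s, S; split => //.
- by apply: maxS.
- move=> i hi; apply/negP => hu; have := mins i hu; lia.
- move=> i hi; apply/negP => hu; have := maxS i hu; lia.
Qed.

Hypothesis Hm2 : forall a b : R, nonunit a -> nonunit b -> a * b = 0.

Lemma punit_of (p : {poly R}) : p`_0 \is a GRing.unit ->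
  (forall i, (0 < i)%N -> nonunit p`_i) -> punit p.
Proof.
move=> h0 hi; set c := p`_0; set N := p - c%:P.
have hN : forall i, nonunit N`_i.
  move=> [|i]; first by rewrite /N coefB coefC /= subrr; exact: nu0.
  by rewrite /N coefB coefC /= subr0; apply: hi.
have NN : N * N = 0.
  apply/polyP => i; rewrite coefM coef0; apply: big1 => j _; exact: Hm2.
have hp : p = c%:P + N by rewrite /N addrC subrK.
have hcc : c%:P * c^-1%:P = 1 by rewrite -polyCM mulrV.
exists (c^-1%:P * (1 - c^-1%:P * N)).
rewrite hp; transitivity (c%:P * c^-1%:P - (c%:P * c^-1%:P) * c^-1%:P * N
   + c^-1%:P * N - c^-1%:P * c^-1%:P * (N * N)); first by ring.
rewrite hcc NN; ring.
Qed.

Lemma GE_mul (p r : {poly R}) : GE p -> GE r -> GE (p * r).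
Proof.
move=> [sp mp cp] [sr mr cr].
have r0 : r != 0 by rewrite -size_poly_gt0; lia.
have hs := size_monicM mp r0.
split; first by rewrite hs; lia.
  by rewrite monicMl.
rewrite hs => i hi; rewrite coefM; apply: nu_sum => j _.
have [lt|ge] := ltnP j (size p).-1; first by apply: nuMl; apply: cp.
apply: nuMr; apply: cr; have := ltn_ord j; lia.
Qed.

Lemma GE_exp (p : {poly R}) m : GE p -> (0 < m)%N -> GE (p ^+ m).
Proof.
move=> hp; elim: m => // [[|m]] IH _; first by rewrite expr1.
by rewrite exprS; apply: GE_mul => //; apply: IH.
Qed.

Lemma GE_addC (p : {poly R}) c : GE p -> nonunit c -> GE (p + c%:P).
Proof.
move=> [sp mp cp] hc.
have hs : (size c%:P < size p)%N by rewrite size_polyC; move: sp; case: (_ != _) => /=; lia.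
split; first by rewrite size_polyDl.
  by rewrite monicE lead_coefDl // -monicE.
rewrite (size_polyDl hs) => i hi; rewrite coefD coefC; apply: Hloc; first exact: cp.
by case: (i == 0%N) => //; exact: nu0.
Qed.

Lemma coef0_exp (p : {poly R}) m : (p ^+ m)`_0 = p`_0 ^+ m.
Proof. by elim: m => [|m IH]; rewrite ?expr0 ?coef1 // !exprS coef0M IH. Qed.

Lemma prod_sq0 (Q Y : {poly R}) (a : R) : a * a = 0 ->
  Q * Q * Y = (Q + a%:P) * ((Q + (- a)%:P) * Y).
Proof.
move=> aa; rewrite polyCN.
have AA : a%:P * a%:P = 0 :> {poly R} by rewrite -polyCM aa.
transitivity (Q * Q * Y - a%:P * a%:P * Y); first by rewrite AA mul0r subr0.
ring.
Qed.

Lemma prod_sq (q : {poly R}) m j (a : R) : a * a = 0 ->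
  q ^+ m * q ^+ m * q ^+ j = (q ^+ m + a%:P) * ((q ^+ m + (- a)%:P) * q ^+ j).
Proof. idtac "Q1". exact: prod_sq0. Qed.

Lemma GE_irr (f : {poly R}) : GE f -> f`_0 != 0 -> pirreducible f.
Proof.
move=> [sf mf cf] f0; split.
  move=> [g fg]; have g0 : g != 0.
    by apply/eqP => g0; move: fg; rewrite g0 mulr0 => /eqP; rewrite eq_sym oner_eq0.
  have := size_monicM mf g0; rewrite fg size_poly1.
  move: g0; rewrite -size_poly_gt0; lia.
have lf : f`_(size f).-1 = 1 by rewrite -lead_coefE; apply/monicP.
move=> g h fE.
have ex : forall u v : {poly R}, f = u * v -> exists i, u`_i \is a GRing.unit.
  move=> u v fuv; apply: Classical_Prop.NNPP => nex.
  have : nonunit f`_(size f).-1.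
    rewrite fuv coefM; apply: nu_sum => j _; apply: nuMl.
    by apply/negP => hu; apply: nex; exists j.
  by rewrite lf /nonunit unitr1.
have fE' : f = h * g by rewrite fE mulrC.
have [s [S [gs gS sS gl gh]]] := unit_range _ (ex _ _ fE).
have [t [T [ht hT tT hl hh]]] := unit_range _ (ex _ _ fE').
have [lo1 lo2] := low_coef _ _ _ _ gl gs hl ht.
have [hi1 hi2] := high_coef _ _ _ _ gh gS hh hT.
rewrite -fE in lo1 lo2 hi1 hi2.
have e1 : (s + t = (size f).-1)%N.
  have [lt|ge|eq] := ltngtP (s + t) (size f).-1 => //.
    by have := cf _ lt; rewrite /nonunit lo1.
  by have := lo2 _ ge; rewrite lf /nonunit unitr1.
have e2 : (S + T = (size f).-1)%N.
  have [lt|ge|eq] := ltngtP (S + T) (size f).-1 => //.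
    by have := hi2 _ lt; rewrite lf /nonunit unitr1.
  have hz : f`_(S + T) = 0 by rewrite nth_default //; move: ge sf; case: (size f) => //= sz; lia.
  by move: hi1; rewrite hz unitr0.
have sS' : s = S by lia.
have tT' : t = T by lia.
subst S T.
have [s0|spos] := posnP s.
  by left; subst s; apply: punit_of => // i hi; apply: gh.
have [t0|tpos] := posnP t.
  by right; subst t; apply: punit_of => // i hi; apply: hh.
exfalso; move: f0; rewrite fE coef0M Hm2 ?eqxx //; [apply: gl | apply: hl] => //.
Qed.

End Helpers.

Theorem lemma4p5 (R : comUnitRingType)
  (Hloc : is_local R) (Hart : artinian R)
  (Hm_nz : exists a : R, nonunit a /\ a != 0)
  (Hm2 : forall a b : R, nonunit a -> nonunit b -> a * b = 0)
  (q : {poly R}) (Hq_GE : GE q) (Hq_irr : pirreducible q)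
  (n : nat) (Hn : (2 <= n)%N) :
  forall k : nat, (2 <= k <= n)%N -> odd k = odd n -> is_length (q ^+ n) k.
Proof.
move=> k /andP [k2 kn] hpar.
have [a [ua a0]] := Hm_nz.
have q0 : nonunit q`_0.
  case: Hq_GE => sq _ cq; apply: cq; move: sq; case: (size q) => //= sz; lia.
have prodn : forall j, \prod_(g <- nseq j q) g = q ^+ j.
  by elim=> [|j IH]; rewrite ?big_nil ?expr0 // big_cons IH exprS.
split; first lia.
have [/eqP ekn|kne] := boolP (k == n).
  subst k; exists (nseq n q); split; first by rewrite size_nseq.
    by move=> g; rewrite mem_nseq => /andP [_ /eqP ->].
  by rewrite prodn.
set d := (n - k)%N.
have hodd : odd d = false by rewrite /d oddB // hpar addbb.
have hd : d = (2 * d./2)%N by rewrite mul2n -{1}(odd_double_half d) hodd.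
set m := (d./2).+1.
have m2 : (2 <= m)%N by rewrite /m; move: hd kne kn; rewrite /d; lia.
have qm0 : (q ^+ m)`_0 = 0.
  by rewrite coef0_exp -(subnKC m2) exprD expr2 (Hm2 _ _ q0 q0) mul0r.
have irr : forall c : R, nonunit c -> c != 0 -> pirreducible (q ^+ m + c%:P).
  move=> c uc c0; apply: (@GE_irr _ Hloc Hm2).
    apply: (@GE_addC _ Hloc) => //; apply: (@GE_exp _ Hloc) => //; lia.
  by rewrite coefD coefC /= qm0 add0r.
exists [:: q ^+ m + a%:P, q ^+ m + (- a)%:P & nseq (k - 2) q]; split.
- by rewrite /= size_nseq; lia.
- move=> g; rewrite !inE => /orP [/eqP -> | /orP [/eqP -> | ]].
  + exact: irr.
  + by apply: irr; [apply: nuN | rewrite oppr_eq0].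
  + by rewrite mem_nseq => /andP [_ /eqP ->].
- rewrite !big_cons prodn.
  have AA : a%:P * a%:P = 0 :> {poly R} by rewrite -polyCM Hm2.
  have en : n = (m + m + (k - 2))%N by move: hd kne kn; rewrite /m /d; lia.
  clearbody m.
  have -> : q ^+ n = q ^+ m * q ^+ m * q ^+ (k - 2) by rewrite -!exprD -en.
  exact: (prod_sq _ q m (k - 2) a (Hm2 _ _ ua ua)).
Qed.
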